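(* Let $(X,d)$ be a compact metric space and $F:X\to 2^X$ a set-valued map which is open, onto and continuous. Then $F$ has the shadowing property if and only if $F^{-1}$ has the shadowing property.
   Context: $2^X$ is the family of nonempty compact subsets of $X$. A set-valued map $F$ is upper semicontinuous if for every $x$ and open $U\supset F(x)$ there is a neighborhood $V$ of $x$ with $F(y)\subset U$ for $y\in V$; lower semicontinuous if for every $x$ and open $U$ with $F(x)\cap U\ne\emptyset$ there is a neighborhood $V$ of $x$ with $F(y)\cap U\neq\emptyset$ for $y\in V$; continuous if both. $F$ is open if $F(U)=\bigcup_{u\in U}F(u)$ is open for every open $U$. $F$ is onto if every $y\in X$ lies in some $F(x)$; then $F^{-1}(y)=\{x:y\in F(x)\}$. For a set-valued map $G$, a $\delta$-pseudo-orbit is a sequence $\{x_n\}_{n\ge0}$ with $d(x_{n+1},G(x_n))<\delta$ for all $n$; a $G$-orbit is $(y_n)$ with $y_{n+1}\in G(y_n)$; $G$ has the shadowing property if for every $\varepsilon>0$ there is $\delta>0$ such that every $\delta$-pseudo-orbit $\{x_n\}$ admits a $G$-orbit $(y_n)$ with $d(x_n,y_n)<\varepsilon$ for all $n$. *)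

(* Defs.v *)
From Stdlib Require Import Reals List.
Open Scope R_scope.

Section MetricDefs.
Context {X : Type} (d : X -> X -> R).

Definition is_metric : Prop :=
  (forall x y, 0 <= d x y) /\
  (forall x y, d x y = 0 <-> x = y) /\
  (forall x y, d x y = d y x) /\
  (forall x y z, d x z <= d x y + d y z).

Definition open_set (U : X -> Prop) : Prop :=
  forall x, U x -> exists r, 0 < r /\ forall y, d x y < r -> U y.

Definition compact_set (K : X -> Prop) : Prop :=
  forall (I : Type) (U : I -> X -> Prop),
    (forall i, open_set (U i)) ->
    (forall x, K x -> exists i, U i x) ->
    exists l : list I, forall x, K x -> exists i, In i l /\ U i x.

Definition compact_space : Prop := compact_set (fun _ => True).

(* a set-valued map F : X -> X -> Prop, with F x viewed as the set {y | F x y} *)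
(* F : X -> 2^X : values are nonempty compact subsets *)
Definition into_2X (F : X -> X -> Prop) : Prop :=
  forall x, (exists y, F x y) /\ compact_set (F x).

Definition usc (F : X -> X -> Prop) : Prop :=
  forall x (U : X -> Prop), open_set U -> (forall y, F x y -> U y) ->
    exists r, 0 < r /\ forall x', d x x' < r -> forall y, F x' y -> U y.

Definition lsc (F : X -> X -> Prop) : Prop :=
  forall x (U : X -> Prop), open_set U -> (exists y, F x y /\ U y) ->
    exists r, 0 < r /\ forall x', d x x' < r -> exists y, F x' y /\ U y.

Definition sv_continuous (F : X -> X -> Prop) : Prop := usc F /\ lsc F.

Definition sv_open (F : X -> X -> Prop) : Prop :=
  forall U : X -> Prop, open_set U -> open_set (fun y => exists u, U u /\ F u y).

Definition sv_onto (F : X -> X -> Prop) : Prop := forall y, exists x, F x y.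

Definition sv_inv (F : X -> X -> Prop) : X -> X -> Prop := fun y x => F x y.

(* delta-pseudo-orbit: d(x_{n+1}, G(x_n)) < delta, where the point-to-set
   distance inf_{z in G(x_n)} d(x_{n+1}, z) is < delta iff some z in G(x_n)
   has d(x_{n+1}, z) < delta *)
Definition pseudo_orbit (G : X -> X -> Prop) (delta : R) (x : nat -> X) : Prop :=
  forall n, exists z, G (x n) z /\ d (x (S n)) z < delta.

Definition is_orbit (G : X -> X -> Prop) (y : nat -> X) : Prop :=
  forall n, G (y n) (y (S n)).

Definition shadowing (G : X -> X -> Prop) : Prop :=
  forall eps, 0 < eps -> exists delta, 0 < delta /\
    forall x : nat -> X, pseudo_orbit G delta x ->
      exists y : nat -> X, is_orbit G y /\ forall n, d (x n) (y n) < eps.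

End MetricDefs.

(* Main.v *)
Require Import Defs.
From Stdlib Require Import Reals.
From Stdlib Require Import Lra Lia List Classical ClassicalEpsilon Arith.
Open Scope R_scope.

Lemma d_refl {X} (d : X->X->R) : is_metric d -> forall x, d x x = 0.
Proof. intros [_ [H _]] x. apply H. reflexivity. Qed.
Lemma d_sym {X} (d:X->X->R) : is_metric d -> forall x y, d x y = d y x.
Proof. intros [_ [_ [H _]]]; auto. Qed.
Lemma d_tri {X} (d:X->X->R) : is_metric d -> forall x y z, d x z <= d x y + d y z.
Proof. intros [_ [_ [_ H]]]; auto. Qed.
Lemma d_neq {X} (d:X->X->R) : is_metric d -> forall x y, x <> y -> 0 < d x y.
Proof.
  intros Hm x y Hn. destruct Hm as [Hp [Hz _]].
  destruct (Rle_lt_or_eq_dec 0 (d x y) (Hp x y)); auto.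
  exfalso. apply Hn. apply Hz. auto.
Qed.

Lemma ball_open {X} (d : X -> X -> R) (Hm : is_metric d) (p : X) r :
  Defs.open_set d (fun z => d p z < r).
Proof.
  intros z Hz. exists (r - d p z). split. lra. intros y Hy.
  pose proof (d_tri d Hm p z y). lra.
Qed.

Lemma far_open {X} (d : X -> X -> R) (Hm : is_metric d) (c : X) t :
  Defs.open_set d (fun z => t < d z c).
Proof.
  intros z Hz. exists (d z c - t). split; [lra|]. intros y Hy.
  pose proof (d_tri d Hm z y c). lra.
Qed.

Lemma uniform_list {T} (A : T -> R -> Prop) :
  (forall t s s', 0 < s' -> s' <= s -> A t s -> A t s') ->
  forall l, (forall t, In t l -> exists s, 0 < s /\ A t s) ->
  exists s, 0 < s /\ forall t, In t l -> A t s.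
Proof.
  intros Hmono l. induction l as [|a l IH]; intros Hl.
  - exists 1. split; [lra|]. intros t [].
  - destruct (Hl a (or_introl eq_refl)) as [s1 [Hs1 HA1]].
    destruct IH as [s2 [Hs2 HA2]]. { intros t Ht. apply Hl. right; auto. }
    assert (Hm : 0 < Rmin s1 s2) by (apply Rmin_glb_lt; auto).
    exists (Rmin s1 s2). split; auto.
    intros t [<-|Ht].
    + eapply Hmono; [exact Hm | apply Rmin_l | exact HA1].
    + eapply Hmono; [exact Hm | apply Rmin_r | exact (HA2 t Ht)].
Qed.

Lemma uniform_list_nat {T} (A : T -> nat -> Prop) :
  (forall t K K', (K <= K')%nat -> A t K -> A t K') ->
  forall l, (forall t, In t l -> exists K, A t K) -> exists K, forall t, In t l -> A t K.
Proof.
  intros Hmono l. induction l as [|a l IH]; intros Hl.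
  - exists O. intros t [].
  - destruct (Hl a (or_introl eq_refl)) as [K1 HA1].
    destruct IH as [K2 HA2]. { intros t Ht. apply Hl. right; auto. }
    exists (Nat.max K1 K2). intros t [<-|Ht].
    + eapply Hmono; [apply Nat.le_max_l | exact HA1].
    + eapply Hmono; [apply Nat.le_max_r | exact (HA2 t Ht)].
Qed.

Lemma cover_lemma {X} (d : X -> X -> R) (Hm : is_metric d) (K : X -> Prop) (P : X -> R -> Prop) :
  compact_set d K -> (forall c, K c -> exists r, 0 < r /\ P c r) ->
  exists l : list (X*R), (forall t, In t l -> 0 < snd t /\ P (fst t) (snd t)) /\
    forall x, K x -> exists t, In t l /\ d (fst t) x < snd t.
Proof.
  intros Hc HP.
  destruct (Hc {t : X*R | 0 < snd t /\ P (fst t) (snd t)}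
              (fun i x => d (fst (proj1_sig i)) x < snd (proj1_sig i))) as [l Hl].
  - intros i. apply ball_open; auto.
  - intros x Kx. destruct (HP x Kx) as [r [Hr Pr]].
    exists (exist (fun t : X*R => 0 < snd t /\ P (fst t) (snd t)) (x, r) (conj Hr Pr)).
    simpl. rewrite d_refl; auto.
  - exists (map (@proj1_sig _ _) l). split.
    + intros t Ht. apply in_map_iff in Ht. destruct Ht as [i [<- _]]. exact (proj2_sig i).
    + intros x Kx. destruct (Hl x Kx) as [i [Hi Ui]]. exists (proj1_sig i). split; auto.
      apply in_map; auto.
Qed.

Definition CG {X} (d : X->X->R) (G : X->X->Prop) :=
  forall a c, ~ G a c -> exists r, 0 < r /\
    forall a' c', d a a' < r -> d c c' < r -> ~ G a' c'.

Lemma CG_from_usc {X} (d : X->X->R) (F : X -> X -> Prop) :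
  is_metric d -> into_2X d F -> usc d F -> CG d F.
Proof.
  intros Hm H2X Husc a c Hn.
  destruct (cover_lemma d Hm (F a) (fun z r => r = d z c / 2) (proj2 (H2X a))) as [l [Hl1 Hl2]].
  { intros z Hz. exists (d z c / 2). split; auto.
    assert (z <> c) by (intro; subst; auto). pose proof (d_neq d Hm z c H). lra. }
  destruct (uniform_list (fun (t : X*R) s => s <= snd t)) with (l := l) as [rho [Hrho HA]].
  { intros; lra. }
  { intros t Ht. exists (snd t). split; [apply Hl1; auto| lra]. }
  assert (Key : forall z, F a z -> rho < d z c).
  { intros z Hz. destruct (Hl2 z Hz) as [t [Ht Hd]]. destruct (Hl1 t Ht) as [_ Heq].
    specialize (HA t Ht). simpl in HA, Heq.
    pose proof (d_tri d Hm (fst t) z c). lra. }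
  destruct (Husc a (fun z => rho/2 < d z c) (far_open d Hm c (rho/2))) as [s [Hs Hsu]].
  { intros z Hz. specialize (Key z Hz). lra. }
  exists (Rmin s (rho/2)). split. { apply Rmin_glb_lt; lra. }
  intros a' c' H1 H2 HF.
  pose proof (Rmin_l s (rho/2)). pose proof (Rmin_r s (rho/2)).
  assert (Haa : d a a' < s) by lra.
  specialize (Hsu a' Haa c' HF). simpl in Hsu. rewrite (d_sym d Hm c' c) in Hsu. lra.
Qed.

Lemma CG_inv {X} (d : X->X->R) (G : X->X->Prop) : CG d G -> CG d (sv_inv G).
Proof.
  intros Hcg a c Hn. destruct (Hcg c a Hn) as [r [Hr Hr']]. exists r. split; auto.
  intros a' c' H1 H2. unfold sv_inv. apply Hr'; auto.
Qed.

Lemma lsc_inv {X} (d : X->X->R) (F : X->X->Prop) : sv_open d F -> lsc d (sv_inv F).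
Proof.
  intros Hop x U HU [y [Hy Uy]].
  destruct (Hop U HU x (ex_intro _ y (conj Uy Hy))) as [r [Hr Hb]].
  exists r. split; auto. intros x' Hx'. destruct (Hb x' Hx') as [u [Uu Fu]].
  exists u. split; auto.
Qed.

Definition ULSC {X} (d : X->X->R) (G : X->X->Prop) :=
  forall eta, 0 < eta -> exists delta, 0 < delta /\
    forall a b c, G a c -> d a b < delta -> exists z, G b z /\ d c z < eta.

Lemma ulsc {X} (d : X->X->R) (G : X->X->Prop) :
  is_metric d -> compact_space d -> lsc d G -> CG d G -> ULSC d G.
Proof.
  intros Hm Hc Hl Hcg eta Heta.
  assert (Loc: forall a, exists s, 0 < s /\ forall a' b c', d a a' < s -> d a b < s ->
             G a' c' -> exists z, G b z /\ d c' z < eta).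
  { intros a.
    destruct (cover_lemma d Hm (fun _ => True)
      (fun c rho => rho <= eta/2 /\ exists s, 0 < s /\
         ((G a c /\ forall b, d a b < s -> exists z, G b z /\ d c z < eta/2) \/
          (forall a' c', d a a' < s -> d c c' < rho -> ~ G a' c'))) Hc) as [l [Hl1 Hl2]].
    - intros c _. destruct (classic (G a c)) as [Hg|Hng].
      + destruct (Hl a (fun z => d c z < eta/2) (ball_open d Hm c (eta/2))) as [s [Hs Hb]].
        { exists c. split; auto. rewrite d_refl; auto; lra. }
        exists (eta/2). split; [lra|]. split; [lra|]. exists s. split; auto.
      + destruct (Hcg a c Hng) as [r [Hr Hr']]. exists (Rmin r (eta/2)).
        split. { apply Rmin_glb_lt; lra. } split. { apply Rmin_r. }
        exists r. split; auto. right. intros a' c' H1 H2. apply Hr'; auto.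
        eapply Rlt_le_trans; [exact H2| apply Rmin_l].
    - destruct (uniform_list (fun (t : X*R) s => (G a (fst t) /\ forall b, d a b < s ->
                  exists z, G b z /\ d (fst t) z < eta/2) \/
                (forall a' c', d a a' < s -> d (fst t) c' < snd t -> ~ G a' c'))) with (l := l)
        as [s [Hs HA]].
      + intros t s s' Hs' Hle [[Hg Hb]|Hn].
        * left; split; auto. intros b Hb'. apply Hb; lra.
        * right; intros a' c' H1 H2; apply Hn; auto; lra.
      + intros t Ht. destruct (Hl1 t Ht) as [_ [_ [s [Hs Hor]]]]. exists s. split; auto.
      + exists s. split; auto. intros a' b c' H1 H2 Hg.
        destruct (Hl2 c' I) as [t [Ht Hd]].
        destruct (HA t Ht) as [[Hga Hb]|Hn].
        * destruct (Hb b H2) as [z [Hz Hdz]]. exists z. split; auto.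
          destruct (Hl1 t Ht) as [_ [Hle _]].
          pose proof (d_tri d Hm c' (fst t) z) as Ht3.
          rewrite (d_sym d Hm c' (fst t)) in Ht3. lra.
        * exfalso. apply (Hn a' c'); auto. }
  destruct (cover_lemma d Hm (fun _ => True)
     (fun a r => forall a' b c', d a a' < 2*r -> d a b < 2*r -> G a' c' ->
        exists z, G b z /\ d c' z < eta) Hc) as [l [Hl1 Hl2]].
  - intros a _. destruct (Loc a) as [s [Hs Hl']]. exists (s/2). split; [lra|].
    intros a' b c' H1 H2 H3. apply (Hl' a' b c'); auto; lra.
  - destruct (uniform_list (fun (t : X*R) s => s <= snd t)) with (l := l) as [del [Hdel HA]].
    + intros; lra.
    + intros t Ht. exists (snd t). split; [apply Hl1; auto | lra].
    + exists del. split; auto. intros a b c Hg Hab.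
      destruct (Hl2 a I) as [t [Ht Hd]]. destruct (Hl1 t Ht) as [Hpos HP].
      specialize (HA t Ht). simpl in HA.
      pose proof (d_tri d Hm (fst t) a b).
      apply (HP a b c); auto; lra.
Qed.

Definition Qp {X} (d : X->X->R) (H : X->X->Prop) (x : nat -> X) (e : R) (n : nat) (v : nat -> X) :=
  forall r, 0 < r -> forall K, exists N, (K <= N)%nat /\ exists u : nat -> X,
    (forall i, (i < N)%nat -> H (u i) (u (S i))) /\
    (forall i, (i <= N)%nat -> d (x i) (u i) < e) /\
    (forall i, (i < n)%nat -> d (v i) (u i) < r).

Definition extv {X} (v : nat -> X) (n : nat) (p : X) : nat -> X :=
  fun i => if Nat.ltb i n then v i else p.

Lemma ex_p {X} (d : X->X->R) H x e (x0 : X) n v :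
  exists p, (exists q, Qp d H x e (S n) (extv v n q)) -> Qp d H x e (S n) (extv v n p).
Proof.
  destruct (classic (exists q, Qp d H x e (S n) (extv v n q))) as [[q Hq]|Hn].
  - exists q; auto.
  - exists x0; intro Hq; contradiction.
Qed.

Definition stepf {X} (d : X->X->R) H x e (x0 : X) n v : X :=
  proj1_sig (constructive_indefinite_description _ (ex_p d H x e x0 n v)).

Fixpoint vs {X} (d : X->X->R) H x e (x0 : X) (n : nat) : nat -> X :=
  match n with
  | O => fun _ => x0
  | S m => extv (vs d H x e x0 m) m (stepf d H x e x0 m (vs d H x e x0 m))
  end.

Lemma step_lemma {X} (d : X->X->R) H x e n v :
  is_metric d -> compact_space d -> Qp d H x e n v -> exists p, Qp d H x e (S n) (extv v n p).
Proof.
  intros Hm Hc HQ. apply NNPP; intro Hno.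
  destruct (cover_lemma d Hm (fun _ => True)
    (fun p r => exists K, forall N, (K <= N)%nat -> forall u : nat -> X,
        (forall i, (i < N)%nat -> H (u i) (u (S i))) ->
        (forall i, (i <= N)%nat -> d (x i) (u i) < e) ->
        (forall i, (i < n)%nat -> d (v i) (u i) < r) -> ~ d p (u n) < r) Hc) as [l [Hl1 Hl2]].
  - intros p _. apply NNPP; intro H0. apply Hno. exists p.
    intros r Hr K. apply NNPP; intro HN. apply H0. exists r. split; auto. exists K.
    intros N HKN u Ho Hs Hv Hd. apply HN. exists N. split; auto. exists u.
    split; auto. split; auto. intros i Hi. unfold extv.
    destruct (Nat.ltb i n) eqn:E.
    + apply Nat.ltb_lt in E. apply Hv; auto.
    + apply Nat.ltb_ge in E. assert (i = n) by lia. subst. auto.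
  - destruct (uniform_list (fun (t : X*R) s => s <= snd t)) with (l := l) as [rho [Hrho HA]].
    + intros; lra.
    + intros t Ht. exists (snd t). split; [apply Hl1; auto | lra].
    + destruct (uniform_list_nat (fun (t : X*R) K => forall N, (K <= N)%nat -> forall u : nat -> X,
        (forall i, (i < N)%nat -> H (u i) (u (S i))) ->
        (forall i, (i <= N)%nat -> d (x i) (u i) < e) ->
        (forall i, (i < n)%nat -> d (v i) (u i) < snd t) -> ~ d (fst t) (u n) < snd t))
        with (l := l) as [K HK].
      * intros t K K' HKK HA' N HN. apply HA'. lia.
      * intros t Ht. exact (proj2 (Hl1 t Ht)).
      * destruct (HQ rho Hrho K) as [N [HKN [u [Ho [Hs Hv]]]]].
        destruct (Hl2 (u n) I) as [t [Ht Hd]].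
        apply (HK t Ht N HKN u Ho Hs); auto.
        intros i Hi. specialize (Hv i Hi). specialize (HA t Ht). simpl in HA. lra.
Qed.

Lemma vs_S_lt {X} (d : X->X->R) H x e (x0 : X) m i :
  (i < m)%nat -> vs d H x e x0 (S m) i = vs d H x e x0 m i.
Proof.
  intros Him. simpl. unfold extv.
  replace (Nat.ltb i m) with true; auto. symmetry. apply Nat.ltb_lt; auto.
Qed.

Lemma vs_eq {X} (d : X->X->R) H x e (x0 : X) n i :
  (i < n)%nat -> vs d H x e x0 n i = vs d H x e x0 (S i) i.
Proof.
  induction n as [|m IH]; intros Hi.
  - lia.
  - destruct (Nat.eq_dec i m) as [->|Hne]; auto.
    rewrite vs_S_lt by lia. apply IH. lia.
Qed.

Lemma limit_lemma {X} (d : X->X->R) (H : X->X->Prop) (x : nat -> X) (e : R) :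
  is_metric d -> compact_space d -> CG d H ->
  (forall N, exists u : nat -> X, (forall i, (i < N)%nat -> H (u i) (u (S i))) /\
     (forall i, (i <= N)%nat -> d (x i) (u i) < e)) ->
  exists y, is_orbit H y /\ forall n, d (x n) (y n) <= e.
Proof.
  intros Hm Hc Hcg Fin.
  assert (HQ : forall n, Qp d H x e n (vs d H x e (x O) n)).
  { induction n as [|n IH].
    - intros r Hr K. destruct (Fin K) as [u [Ho Hs]]. exists K. split; auto.
      exists u. split; auto. split; auto. intros i Hi; lia.
    - change (Qp d H x e (S n) (extv (vs d H x e (x O) n) n
               (stepf d H x e (x O) n (vs d H x e (x O) n)))).
      unfold stepf. destruct (constructive_indefinite_description _ _) as [p Hp]. simpl.
      apply Hp. apply step_lemma; auto. }
  exists (fun i => vs d H x e (x O) (S i) i). split.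
  - intros i. apply NNPP; intro Hn. destruct (Hcg _ _ Hn) as [r [Hr Hr']].
    destruct (HQ (S (S i)) r Hr (S i)) as [N [HN [u [Ho [Hs Hv]]]]].
    apply (Hr' (u i) (u (S i))).
    + specialize (Hv i ltac:(lia)). rewrite vs_eq in Hv by lia. exact Hv.
    + exact (Hv (S i) ltac:(lia)).
    + apply Ho. lia.
  - intros i. apply Rnot_lt_le. intro Hlt.
    set (yi := vs d H x e (x O) (S i) i) in *.
    destruct (HQ (S i) (d (x i) yi - e) ltac:(lra) i) as [N [HN [u [Ho [Hs Hv]]]]].
    specialize (Hs i HN). specialize (Hv i ltac:(lia)).
    pose proof (d_tri d Hm (x i) (u i) yi). rewrite (d_sym d Hm (u i) yi) in H0.
    fold yi in Hv. lra.
Qed.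

Lemma core {X} (d : X->X->R) (G : X->X->Prop) :
  is_metric d -> compact_space d -> (forall x, exists y, G x y) -> lsc d G -> CG d G ->
  shadowing d G -> shadowing d (sv_inv G).
Proof.
  intros Hm Hc Hne Hl Hcg Hsh eps Heps.
  destruct (Hsh (eps/2)) as [d1 [Hd1 Hsh1]]; [lra|].
  destruct (ulsc d G Hm Hc Hl Hcg d1 Hd1) as [del [Hdel Hu]].
  exists del. split; auto. intros x Hx.
  pose (f := fun a => proj1_sig (constructive_indefinite_description _ (Hne a))).
  assert (Hf : forall a, G a (f a)).
  { intros a. unfold f. destruct (constructive_indefinite_description _ _); auto. }
  assert (Fin : forall N, exists u : nat -> X, (forall i, (i < N)%nat -> sv_inv G (u i) (u (S i))) /\
     (forall i, (i <= N)%nat -> d (x i) (u i) < eps/2)).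
  { intros N.
    pose (w := fun k => if Nat.leb k N then x (N - k)%nat else Nat.iter (k - N) f (x O)).
    assert (Hw1 : forall k, (k <= N)%nat -> w k = x (N-k)%nat).
    { intros k Hk. unfold w. apply Nat.leb_le in Hk. rewrite Hk. reflexivity. }
    assert (Hw2 : forall k, (N <= k)%nat -> w k = Nat.iter (k-N) f (x O)).
    { intros k Hk. unfold w. destruct (Nat.leb k N) eqn:E.
      - apply Nat.leb_le in E. assert (k = N) by lia. subst. rewrite Nat.sub_diag. reflexivity.
      - reflexivity. }
    destruct (Hsh1 w) as [y [Hy Hyd]].
    - intros k. destruct (le_lt_dec N k) as [Hk|Hk].
      + exists (w (S k)). split; [| rewrite d_refl; auto; lra].
        rewrite (Hw2 (S k)) by lia. rewrite (Hw2 k) by lia.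
        replace (S k - N)%nat with (S (k - N)) by lia. exact (Hf _).
      + destruct (Hx (N - S k)%nat) as [z [Hz1 Hz2]].
        destruct (Hu z (x (S (N - S k))) (x (N - S k)%nat) Hz1) as [z' [Hz'1 Hz'2]].
        { rewrite d_sym; auto. }
        exists z'. rewrite (Hw1 k) by lia. rewrite (Hw1 (S k)) by lia.
        replace (N - k)%nat with (S (N - S k)) by lia. split; auto.
    - exists (fun i => y (N - i)%nat). split.
      + intros i Hi. unfold sv_inv. replace (N - i)%nat with (S (N - S i)) by lia. apply Hy.
      + intros i Hi. specialize (Hyd (N - i)%nat). rewrite Hw1 in Hyd by lia.
        replace (N - (N - i))%nat with i in Hyd by lia. exact Hyd. }
  destruct (limit_lemma d (sv_inv G) x (eps/2) Hm Hc (CG_inv d G Hcg) Fin) as [y [Hy Hyd]].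
  exists y. split; auto. intros n. specialize (Hyd n). lra.
Qed.

Theorem mainTheorem7 (X : Type) (d : X -> X -> R) (F : X -> X -> Prop) :
  is_metric d -> compact_space d -> into_2X d F ->
  sv_open d F -> sv_onto F -> sv_continuous d F ->
  (shadowing d F <-> shadowing d (sv_inv F)).
Proof.
  intros Hm Hc H2X Hop Hon [Hus Hls].
  assert (Hcg : CG d F) by (apply CG_from_usc; auto).
  split.
  - apply core; auto. intro x; apply H2X.
  - intro Hs.
    assert (Hne : forall y, exists x, sv_inv F y x).
    { intro y. destruct (Hon y) as [x Hx]. exists x. exact Hx. }
    exact (core d (sv_inv F) Hm Hc Hne (lsc_inv d F Hop) (CG_inv d F Hcg) Hs).
Qed.
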